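(* Let $B$ be a Blaschke product in $\mathbb{C}_0$ with zero sequence $\mathscr{Z}_B$. Then for every $\gamma>0$ and every $t\in\mathbb{R}$ such that $B$ has no zeros on the line $\mathrm{Im}\,s=t$, \[\left|\mathrm{Im}\int_0^\gamma \frac{B'(\sigma+it)}{B(\sigma+it)}\,\sigma\,d\sigma\right| \leq \left(2\pi + \frac{\pi^2}{3} \gamma^2 \right) \sup_{\tau\in\mathbb{R}} \sum_{\substack{\alpha \in \mathscr{Z}_B \\ \tau \leq \mathrm{Im}\,\alpha \leq \tau+1 }} \mathrm{Re}\,\alpha.\]
   Context: $\mathbb{C}_0=\{s:\mathrm{Re}\,s>0\}$. A Blaschke product in $\mathbb{C}_0$ is $B(s)=\prod_{\alpha\in\mathscr{Z}_B}\frac{1-\overline{\alpha}^2}{|1-\alpha^2|}\frac{s-\alpha}{s+\overline{\alpha}}$, where the sequence $\mathscr{Z}_B\subset\mathbb{C}_0$ (repeated according to multiplicity) satisfies $\sum_{\alpha\in\mathscr{Z}_B}\frac{\mathrm{Re}\,\alpha}{1+(\mathrm{Im}\,\alpha)^2}<\infty$. *)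

(* Defs.v *)
From Stdlib Require Import Reals.
From Coquelicot Require Import Coquelicot.
Open Scope R_scope.

(* A zero sequence is encoded as Z : nat -> option C; the entries [Some a]
   list the zeros (repeated according to multiplicity), [None] entries are
   padding, so finite (or empty) zero sets are allowed. *)

(* normalising constant (1 - conj(a)^2)/|1 - a^2|; for a = 1 (where
   |1-a^2| = 0 and the formula is undefined) we use the constant 1. *)
Definition bconst (a : C) : C :=
  if Req_EM_T (Cmod (1 - a * a)%C) 0 then 1%C
  else ((1 - Cconj a * Cconj a) / RtoC (Cmod (1 - a * a)%C))%C.

Definition bfactor (a s : C) : C :=
  (bconst a * ((s - a) / (s + Cconj a)))%C.

Fixpoint bpartial (Z : nat -> option C) (s : C) (N : nat) : C :=
  match N with
  | O => 1%C
  | S n => (bpartial Z s n *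
            match Z n with Some a => bfactor a s | None => 1%C end)%C
  end.

Definition zeros_in_C0 (Z : nat -> option C) : Prop :=
  forall n a, Z n = Some a -> 0 < Re a.

Definition blaschke_cond (Z : nat -> option C) : Prop :=
  ex_series (fun n => match Z n with
                      | Some a => Re a / (1 + (Im a) ^ 2)
                      | None => 0 end).

Definition is_blaschke_product (Z : nat -> option C) (B : C -> C) : Prop :=
  forall s : C, 0 < Re s ->
    filterlim (bpartial Z s) eventually (locally (B s)).

Fixpoint window_sum (Z : nat -> option C) (tau : R) (N : nat) : R :=
  match N with
  | O => 0
  | S n => window_sum Z tau n +
           match Z n with
           | Some a =>
               if Rle_dec tau (Im a) then
                 if Rle_dec (Im a) (tau + 1) then Re a else 0
               else 0
           | None => 0 end
  end.

(* Main.v *)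
Require Import Defs.
From Stdlib Require Import Reals.
From Coquelicot Require Import Coquelicot.
From Stdlib Require Import Lra Psatz Ranalysis5 Classical.
Open Scope R_scope.

Definition D1 a d s := (s - a)^2 + d^2.
Definition D2 a d s := (s + a)^2 + d^2.
Definition psi1 a d s := ln (D1 a d s / D2 a d s) / 2.
Definition psi2 a d s := atan ((s + a)/d) - atan ((s - a)/d).
Definition dpsi1 a d s := (s - a)/D1 a d s - (s + a)/D2 a d s.
Definition dpsi2 a d s := d / D2 a d s - d / D1 a d s.
Definition Hf a d s := - (d/2 * ln (D1 a d s / D2 a d s) + a*(atan((s-a)/d) + atan((s+a)/d))).

Lemma D1_pos a d s : d <> 0 -> 0 < D1 a d s.
Proof. intros; unfold D1. assert (0 < d^2) by (apply pow2_gt_0; auto). pose proof (pow2_ge_0 (s-a)). lra. Qed.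
Lemma D2_pos a d s : d <> 0 -> 0 < D2 a d s.
Proof. intros; unfold D2. assert (0 < d^2) by (apply pow2_gt_0; auto). pose proof (pow2_ge_0 (s+a)). lra. Qed.

Ltac prep a d s Hd :=
  let H1 := fresh in let H2 := fresh in
  pose proof (D1_pos a d s Hd) as H1; pose proof (D2_pos a d s Hd) as H2;
  unfold D1, D2 in H1, H2; simpl in H1, H2; rewrite ?Rmult_1_r in H1, H2.

Lemma psi1_der a d s : d <> 0 -> is_derive (psi1 a d) s (dpsi1 a d s).
Proof.
  intros Hd. prep a d s Hd.
  unfold psi1, dpsi1, D1, D2 in *. auto_derive; rewrite ?Rmult_1_r.
  - repeat split; try lra. apply Rdiv_lt_0_compat; lra.
  - simpl. field. repeat split; lra.
Qed.

Lemma psi2_der a d s : d <> 0 -> is_derive (psi2 a d) s (dpsi2 a d s).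
Proof.
  intros Hd. prep a d s Hd.
  unfold psi2, dpsi2, D1, D2 in *. auto_derive; rewrite ?Rmult_1_r.
  - repeat split; try lra.
  - simpl. field. repeat split; try lra.
Qed.

Lemma Hf_der a d s : d <> 0 -> is_derive (Hf a d) s (s * dpsi2 a d s).
Proof.
  intros Hd. prep a d s Hd.
  unfold Hf, dpsi2, D1, D2 in *. auto_derive; rewrite ?Rmult_1_r.
  - repeat split; try lra. apply Rdiv_lt_0_compat; lra.
  - simpl. field. repeat split; try lra.
Qed.

Lemma cont_of_der (F dF : R -> R) y : is_derive F y (dF y) -> continuity_pt F y.
Proof.
  intros H. apply continuity_pt_filterlim. apply (ex_derive_continuous (K:=R_AbsRing) (V:=R_NormedModule)). eexists; eauto.
Qed.

Lemma mono0 (F dF : R -> R) x : 0 <= x -> (forall y, is_derive F y (dF y)) ->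
  (forall y, 0 <= y <= x -> dF y <= 0) -> F x <= F 0.
Proof.
  intros Hx Hd Hs.
  destruct (MVT_gen F 0 x dF) as [c [Hc E]].
  - intros; apply Hd.
  - intros; eapply cont_of_der; apply Hd.
  - rewrite Rmin_left in Hc by lra. rewrite Rmax_right in Hc by lra.
    specialize (Hs c Hc). nra.
Qed.

Lemma Rmult_le_0_r a b : a <= 0 -> 0 <= b -> a * b <= 0.
Proof. intros; nra. Qed.
Lemma Rmult_le_0_l a b : 0 <= a -> b <= 0 -> a * b <= 0.
Proof. intros; nra. Qed.

Lemma Rabs_frac N P Q : 0 < P -> -Q <= N <= Q -> Rabs (N / P) <= Q / P.
Proof.
  intros HP HN. unfold Rdiv. rewrite Rabs_mult, Rabs_inv, (Rabs_pos_eq P) by lra.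
  apply Rmult_le_compat_r. left; apply Rinv_0_lt_compat; lra. apply Rabs_le; lra.
Qed.

Lemma dpsi1_bound a d s : d <> 0 -> 0 <= a -> 0 <= s -> Rabs (dpsi1 a d s) <= 2 * a / D1 a d s.
Proof.
  intros Hd Ha Hs. pose proof (D1_pos a d s Hd). pose proof (D2_pos a d s Hd).
  replace (dpsi1 a d s) with ((2*a*(s^2-a^2-d^2)) / (D1 a d s * D2 a d s))
    by (unfold dpsi1, D1, D2 in *; field; lra).
  replace (2 * a / D1 a d s) with (2*a*D2 a d s / (D1 a d s * D2 a d s)) by (field; lra).
  apply Rabs_frac. nra. unfold D2. split; nra.
Qed.

Lemma dpsi2_bound a d s : d <> 0 -> 0 <= a -> 0 <= s -> Rabs (dpsi2 a d s) <= 2 * a / D1 a d s.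
Proof.
  intros Hd Ha Hs. pose proof (D1_pos a d s Hd). pose proof (D2_pos a d s Hd).
  replace (dpsi2 a d s) with ((-4*s*a*d) / (D1 a d s * D2 a d s))
    by (unfold dpsi2, D1, D2 in *; field; lra).
  replace (2 * a / D1 a d s) with (2*a*D2 a d s / (D1 a d s * D2 a d s)) by (field; lra).
  apply Rabs_frac. nra. unfold D2.
  assert (0 <= (s - d)^2) by apply pow2_ge_0.
  assert (0 <= (s + d)^2) by apply pow2_ge_0.
  split; nra.
Qed.

Lemma Hf_0 a d : d <> 0 -> Hf a d 0 = 0.
Proof.
  intros Hd. unfold Hf. replace ((0 - a)/d) with (-((0+a)/d)) by (unfold Rdiv; ring).
  rewrite atan_opp. replace (D1 a d 0) with (D2 a d 0) by (unfold D1, D2; ring).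
  rewrite Rdiv_diag by (pose proof (D2_pos a d 0 Hd); lra). rewrite ln_1. ring.
Qed.

Lemma Hf_odd_d a d s : Hf a (-d) s = - Hf a d s.
Proof.
  unfold Hf. replace (D1 a (-d) s) with (D1 a d s) by (unfold D1; ring).
  replace (D2 a (-d) s) with (D2 a d s) by (unfold D2; ring).
  replace ((s - a) / - d) with (- ((s-a)/d)) by (unfold Rdiv; rewrite Rinv_opp; ring).
  replace ((s + a) / - d) with (- ((s+a)/d)) by (unfold Rdiv; rewrite Rinv_opp; ring).
  rewrite !atan_opp. field.
Qed.

Lemma Hf_odd_s a d s : d <> 0 -> Hf a d (-s) = - Hf a d s.
Proof.
  intros Hd. pose proof (D1_pos a d s Hd). pose proof (D2_pos a d s Hd).
  unfold Hf. replace (D1 a d (-s)) with (D2 a d s) by (unfold D1, D2; ring).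
  replace (D2 a d (-s)) with (D1 a d s) by (unfold D1, D2; ring).
  replace (D2 a d s / D1 a d s) with (/ (D1 a d s / D2 a d s)) by (field; lra).
  rewrite ln_Rinv by (apply Rdiv_lt_0_compat; lra).
  replace ((- s - a) / d) with (- ((s+a)/d)) by (unfold Rdiv; ring).
  replace ((- s + a) / d) with (- ((s-a)/d)) by (unfold Rdiv; ring).
  rewrite !atan_opp. field.
Qed.

Lemma Hf_nonpos a d s : 0 < d -> 0 < a -> 0 <= s -> Hf a d s <= 0.
Proof.
  intros Hd Ha Hs. rewrite <- (Hf_0 a d) by lra.
  apply (mono0 (Hf a d) (fun y => y * dpsi2 a d y)); auto.
  - intros; apply Hf_der; lra.
  - intros y Hy. assert (Hd' : d <> 0) by lra.
    pose proof (D1_pos a d y Hd'). pose proof (D2_pos a d y Hd').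
    replace (y * dpsi2 a d y) with ((-4*y*y*a*d) / (D1 a d y * D2 a d y))
      by (unfold dpsi2, D1, D2 in *; field; lra).
    unfold Rdiv. apply Rmult_le_0_r.
    assert (0 <= y*y) by nra. assert (0 <= a*d) by nra. assert (0 <= (y*y)*(a*d)) by nra. nra.
    left; apply Rinv_0_lt_compat; nra.
Qed.

Lemma Hf_pi a d s : 0 < d -> 0 < a -> 0 <= s -> - Hf a d s <= PI * a.
Proof.
  intros Hd Ha Hs. assert (Hd' : d <> 0) by lra.
  pose proof (D1_pos a d s Hd'). pose proof (D2_pos a d s Hd').
  assert (L : ln (D1 a d s / D2 a d s) <= 0).
  { assert (D2 a d s - D1 a d s = 4*s*a) by (unfold D1, D2; ring).
    assert (D1 a d s <= D2 a d s) by nra.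
    destruct (Req_dec (D1 a d s) (D2 a d s)) as [E|E].
    - rewrite E, Rdiv_diag by lra. rewrite ln_1; lra.
    - rewrite <- ln_1. left. apply ln_increasing. apply Rdiv_lt_0_compat; lra.
      apply (Rmult_lt_reg_r (D2 a d s)); auto. unfold Rdiv. rewrite Rmult_assoc, Rinv_l by lra. lra. }
  pose proof (atan_bound ((s-a)/d)). pose proof (atan_bound ((s+a)/d)).
  unfold Hf. assert (0 <= d/2 * - ln (D1 a d s / D2 a d s)).
  { apply Rmult_le_pos; lra. }
  nra.
Qed.

Lemma Hf_quad a d s : 0 < d -> 0 < a -> 0 <= s -> - Hf a d s <= 3/4 * s^2 * a / d^2.
Proof.
  intros Hd Ha Hs. assert (Hd' : d <> 0) by lra.
  set (F := fun y => - Hf a d y - 3/4 * y^2 * a / d^2).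
  assert (F s <= F 0).
  { apply (mono0 F (fun y => - (y * dpsi2 a d y) - 3/2 * y * a / d^2)); auto.
    - intros y. unfold F. apply (is_derive_minus (fun y => - Hf a d y) (fun y => 3/4 * y^2 * a / d^2)).
      + apply (is_derive_opp (Hf a d)). apply Hf_der; auto.
      + auto_derive; auto. field; auto.
    - intros y Hy.
      pose proof (D1_pos a d y Hd'). pose proof (D2_pos a d y Hd').
      replace (- (y * dpsi2 a d y) - 3/2 * y * a / d^2) with
        ((y*a*(8*y*d^3 - 3 * (D1 a d y * D2 a d y))) / (2 * d^2 * (D1 a d y * D2 a d y)))
      by (unfold dpsi2, D1, D2 in *; field; lra).
      unfold Rdiv. apply Rmult_le_0_r.
      + apply Rmult_le_0_l. nra.
        assert (E : D1 a d y * D2 a d y = d^2*(2*y^2+d^2) + ((y^2-a^2)^2 + 2*d^2*a^2))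
          by (unfold D1, D2; ring).
        rewrite E. assert (0 <= (y^2-a^2)^2) by apply pow2_ge_0.
        assert (0 <= (3*y-2*d)^2) by apply pow2_ge_0.
        assert (0 <= 6*y^2 - 8*y*d + 3*d^2) by nra.
        assert (0 < d^2) by nra.
        assert (0 <= d^2 * (6*y^2 - 8*y*d + 3*d^2)) by nra.
        assert (0 <= d^2*a^2) by nra. nra.
      + left; apply Rinv_0_lt_compat. assert (0 < d^2) by nra.
        apply Rmult_lt_0_compat; [lra | apply Rmult_lt_0_compat; auto]. }
  unfold F in H. rewrite Hf_0 in H by auto. lra.
Qed.

Lemma Hf_abs_pi a d s : d <> 0 -> 0 < a -> Rabs (Hf a d s) <= PI * a.
Proof.
  intros Hd Ha.
  assert (K : forall d s, 0 < d -> 0 <= s -> Rabs (Hf a d s) <= PI * a).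
  { intros d0 s0 H1 H2. pose proof (Hf_nonpos a d0 s0 H1 Ha H2). pose proof (Hf_pi a d0 s0 H1 Ha H2).
    rewrite Rabs_left1 by lra. lra. }
  destruct (Rle_or_lt 0 s); destruct (Rlt_or_le 0 d).
  - auto.
  - replace d with (- - d) by ring. rewrite Hf_odd_d, Rabs_Ropp. apply K; lra.
  - replace s with (- - s) by ring. rewrite Hf_odd_s by auto. rewrite Rabs_Ropp. apply K; lra.
  - replace s with (- - s) by ring. rewrite Hf_odd_s by auto. rewrite Rabs_Ropp.
    replace d with (- - d) by ring. rewrite Hf_odd_d, Rabs_Ropp. apply K; lra.
Qed.

Lemma Hf_abs_quad a d s : d <> 0 -> 0 < a -> Rabs (Hf a d s) <= 3/4 * s^2 * a / d^2.
Proof.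
  intros Hd Ha.
  assert (K : forall d s, 0 < d -> 0 <= s -> Rabs (Hf a d s) <= 3/4 * s^2 * a / d^2).
  { intros d0 s0 H1 H2. pose proof (Hf_nonpos a d0 s0 H1 Ha H2). pose proof (Hf_quad a d0 s0 H1 Ha H2).
    rewrite Rabs_left1 by lra. lra. }
  destruct (Rle_or_lt 0 s); destruct (Rlt_or_le 0 d).
  - auto.
  - replace d with (- - d) by ring. rewrite Hf_odd_d, Rabs_Ropp.
    replace ((- - d)^2) with ((-d)^2) by ring. apply K; lra.
  - replace s with (- - s) by ring. rewrite Hf_odd_s by auto. rewrite Rabs_Ropp.
    replace ((- - s)^2) with ((-s)^2) by ring. apply K; lra.
  - replace s with (- - s) by ring. rewrite Hf_odd_s by auto. rewrite Rabs_Ropp.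
    replace d with (- - d) by ring. rewrite Hf_odd_d, Rabs_Ropp.
    replace ((- - s)^2) with ((-s)^2) by ring. replace ((- - d)^2) with ((-d)^2) by ring. apply K; lra.
Qed.

Definition cexp (x y : R) : C := (exp x * cos y, exp x * sin y).

Lemma cexp_add x1 y1 x2 y2 : (cexp x1 y1 * cexp x2 y2)%C = cexp (x1 + x2) (y1 + y2).
Proof.
  unfold cexp, Cmult; simpl. rewrite exp_plus, cos_plus, sin_plus. f_equal; ring.
Qed.

Lemma cexp_0 : cexp 0 0 = 1%C.
Proof. unfold cexp. rewrite exp_0, cos_0, sin_0. unfold RtoC. f_equal; ring. Qed.

Lemma sqrt_sq_eq p q : 0 < p -> 0 < q -> p^2 = q^2 -> p = q.
Proof. intros. nra. Qed.

Lemma ratio_cexp x a d : d <> 0 ->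
  Cdiv (x - a, d) (x + a, d) = cexp (psi1 a d x) (psi2 a d x).
Proof.
  intros Hd. pose proof (D1_pos a d x Hd) as P1. pose proof (D2_pos a d x Hd) as P2.
  unfold cexp, psi1, psi2.
  rewrite cos_minus, sin_minus, cos_atan, cos_atan, sin_atan, sin_atan.
  set (A := (x + a)/d). set (B := (x - a)/d).
  replace (exp (ln (D1 a d x / D2 a d x) / 2)) with (sqrt (D1 a d x / D2 a d x)).
  2:{ rewrite <- Rpower_sqrt by (apply Rdiv_lt_0_compat; lra). unfold Rpower. f_equal. field. }
  set (w := sqrt (D1 a d x / D2 a d x)). set (u := sqrt (1 + A²)). set (v := sqrt (1 + B²)).
  assert (HA : 0 < 1 + A²) by (pose proof (Rle_0_sqr A); lra).
  assert (HB : 0 < 1 + B²) by (pose proof (Rle_0_sqr B); lra).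
  assert (Hw : 0 < w) by (apply sqrt_lt_R0; apply Rdiv_lt_0_compat; lra).
  assert (Hu : 0 < u) by (apply sqrt_lt_R0; lra).
  assert (Hv : 0 < v) by (apply sqrt_lt_R0; lra).
  assert (Hw2 : w^2 = D1 a d x / D2 a d x) by (unfold w; rewrite <- Rsqr_pow2; apply Rsqr_sqrt; left; apply Rdiv_lt_0_compat; lra).
  assert (Hu2 : u^2 = 1 + A²) by (unfold u; rewrite <- Rsqr_pow2; apply Rsqr_sqrt; lra).
  assert (Hv2 : v^2 = 1 + B²) by (unfold v; rewrite <- Rsqr_pow2; apply Rsqr_sqrt; lra).
  assert (K : w / (u * v) = d^2 / D2 a d x).
  { apply sqrt_sq_eq.
    - apply Rdiv_lt_0_compat; nra.
    - apply Rdiv_lt_0_compat; [apply pow2_gt_0; auto | lra].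
    - replace ((w / (u*v))^2) with (w^2 / (u^2 * v^2)) by (field; split; lra).
      rewrite Hw2, Hu2, Hv2. unfold A, B, Rsqr, D1, D2 in *. field. repeat split; try lra. }
  unfold Cdiv, Cinv, Cmult; simpl.
  f_equal.
  - transitivity (w / (u*v) * (1 + A * B)).
    2:{ field. lra. }
    rewrite K. unfold A, B, D1, D2 in *. field. lra.
  - transitivity (w / (u*v) * (A - B)).
    2:{ field. lra. }
    rewrite K. unfold A, B, D1, D2 in *. field. lra.
Qed.

Definition zt (Z : nat -> option C) (t : R) (f : R -> R -> R -> R) (k : nat) (s : R) : R :=
  match Z k with Some al => f (fst al) (t - snd al) s | None => 0 end.

Fixpoint psum (u : nat -> R) (N : nat) : R :=
  match N with O => 0 | S n => psum u n + u n end.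

Fixpoint Uprod (Z : nat -> option C) (N : nat) : C :=
  match N with O => 1%C | S n => (Uprod Z n * match Z n with Some a => bconst a | None => 1%C end)%C end.

Lemma C4 (u x c y : C) : (u*x*(c*y) = u*c*(x*y))%C.
Proof. ring. Qed.
Lemma C1 (u x : C) : (u*x*1 = u*1*x)%C.
Proof. ring. Qed.

Lemma bpartial_cexp Z t s N : (forall n al, Z n = Some al -> Im al <> t) ->
  bpartial Z (s, t) N = (Uprod Z N * cexp (psum (fun k => zt Z t psi1 k s) N) (psum (fun k => zt Z t psi2 k s) N))%C.
Proof.
  intros Hl. induction N as [|n IH]; simpl.
  - rewrite cexp_0. symmetry. apply Cmult_1_r.
  - rewrite IH. destruct (Z n) as [al|] eqn:E.
    + destruct al as [a b]. assert (Hd : t - b <> 0).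
      { specialize (Hl n (a,b) E). simpl in Hl. lra. }
      assert (Ez : forall f, zt Z t f n s = f a (t - b) s) by (intros; unfold zt; rewrite E; reflexivity).
      rewrite !Ez. unfold bfactor.
      replace ((s, t) - (a, b))%C with ((s - a, t - b) : C) by (unfold Cminus, Cplus, Copp; simpl; f_equal; ring).
      replace ((s, t) + Cconj (a, b))%C with ((s + a, t - b) : C) by (unfold Cconj, Cplus; simpl; f_equal; ring).
      rewrite ratio_cexp by auto. simpl.
      rewrite <- cexp_add. apply C4.
    + assert (Ez : forall f, zt Z t f n s = 0) by (intros; unfold zt; rewrite E; reflexivity).
      rewrite !Ez, Rplus_0_r, Rplus_0_r. apply C1.
Qed.

Lemma psum_sum a n : psum a (S n) = sum_f_R0 a n.
Proof. induction n; simpl in *. ring. rewrite IHn. ring. Qed.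

Lemma psum_ext a b n : (forall k, a k = b k) -> psum a n = psum b n.
Proof. intros H; induction n; simpl; auto. rewrite IHn, H; auto. Qed.

Lemma psum_minus a b n : psum (fun k => a k - b k) n = psum a n - psum b n.
Proof. induction n; simpl; [ring| rewrite IHn; ring]. Qed.

Lemma psum_scal c a n : psum (fun k => c * a k) n = c * psum a n.
Proof. induction n; simpl; [ring| rewrite IHn; ring]. Qed.

Lemma psum_zero n : psum (fun _ => 0) n = 0.
Proof. induction n; simpl; [ring| rewrite IHn; ring]. Qed.

Lemma ex_series_tail (u m : nat -> R) K0 :
  (forall k, (K0 <= k)%nat -> Rabs (u k) <= m k) -> ex_series m -> ex_series u.
Proof.
  intros H Hm. apply (proj2 (ex_series_incr_n (K:=R_AbsRing) (V:=R_NormedModule) u K0)).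
  apply (ex_series_le (K:=R_AbsRing) (V:=R_CompleteNormedModule) _ (fun k => m (K0 + k)%nat)).
  - intros n. apply H. lia.
  - apply (proj1 (ex_series_incr_n (K:=R_AbsRing) (V:=R_NormedModule) m K0)). auto.
Qed.

Lemma psum_lim (a : nat -> R) : ex_series a -> is_lim_seq (psum a) (Series a).
Proof.
  intros H. apply is_lim_seq_incr_1.
  apply Series_correct in H. 
  eapply is_lim_seq_ext. 2: apply H.
  intros n. rewrite sum_n_Reals, <- psum_sum. reflexivity.
Qed.

Lemma tail_lim (m : nat -> R) : ex_series m -> is_lim_seq (fun n => Series (fun k => m (n + k)%nat)) 0.
Proof.
  intros H. apply is_lim_seq_incr_1.
  apply is_lim_seq_ext with (fun n => Series m - psum m (S n)).
  - intros n. rewrite (Series_incr_n m (S n)) by (auto; lia). simpl pred. rewrite psum_sum. ring.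
  - replace (Finite 0) with (Rbar_minus (Series m) (Series m)) by (simpl; f_equal; ring).
    apply is_lim_seq_minus'. apply is_lim_seq_const.
    apply (is_lim_seq_incr_1 (psum m)). apply psum_lim; auto.
Qed.

Lemma Mtest_unif (u : nat -> R -> R) (m : nat -> R) (P : R -> Prop) K0 :
  ex_series m -> (forall k y, (K0 <= k)%nat -> P y -> Rabs (u k y) <= m k) ->
  forall eps, 0 < eps -> exists N, forall n y, (N <= n)%nat -> P y ->
    Rabs (Series (fun k => u k y) - psum (fun k => u k y) n) < eps.
Proof.
  intros Hm Hb eps Heps.
  pose proof (tail_lim m Hm) as T. apply is_lim_seq_spec in T.
  destruct (T (mkposreal eps Heps)) as [N1 HN1]. simpl in HN1.
  exists (S (max K0 N1)). intros n y Hn Py.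
  assert (Hex : ex_series (fun k => u k y)).
  { apply (ex_series_tail _ m K0); auto. }
  rewrite (Series_incr_n _ n) by (auto; lia).
  destruct n as [|n]; [lia|]. simpl pred. rewrite psum_sum.
  replace (sum_f_R0 (fun k => u k y) n + Series (fun k => u (S n + k)%nat y) - sum_f_R0 (fun k => u k y) n)
    with (Series (fun k => u (S n + k)%nat y)) by ring.
  assert (Hexm : ex_series (fun k => m (S n + k)%nat)) by (apply (proj1 (ex_series_incr_n (K:=R_AbsRing) (V:=R_NormedModule) m (S n))); auto).
  assert (Hexa : ex_series (fun k => Rabs (u (S n + k)%nat y))).
  { apply (ex_series_le (K:=R_AbsRing) (V:=R_CompleteNormedModule) _ (fun k => m (S n + k)%nat)); auto.
    intros k. unfold norm; simpl. unfold abs; simpl. rewrite Rabs_Rabsolu. apply Hb; auto. lia. }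
  eapply Rle_lt_trans. apply Series_Rabs; auto.
  eapply Rle_lt_trans. apply (Series_le _ (fun k => m (S n + k)%nat)); auto.
  { intros k. split. apply Rabs_pos. apply Hb; auto. lia. }
  specialize (HN1 (S n) ltac:(lia)).
  rewrite Rminus_0_r in HN1. eapply Rle_lt_trans. apply Rle_abs. auto.
Qed.

Lemma Mtest_CVU (u : nat -> R -> R) (m : nat -> R) c r K0 :
  ex_series m -> (forall k y, (K0 <= k)%nat -> Boule c r y -> Rabs (u k y) <= m k) ->
  CVU (fun n y => psum (fun k => u k y) n) (fun y => Series (fun k => u k y)) c r.
Proof.
  intros Hm Hb eps Heps. destruct (Mtest_unif u m (Boule c r) K0 Hm Hb eps Heps) as [N HN].
  exists N. intros; apply HN; auto.
Qed.

Lemma Mtest_cv (u : nat -> R -> R) (m : nat -> R) (P : R -> Prop) K0 y :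
  ex_series m -> (forall k y, (K0 <= k)%nat -> P y -> Rabs (u k y) <= m k) -> P y ->
  Un_cv (fun n => psum (fun k => u k y) n) (Series (fun k => u k y)).
Proof.
  intros Hm Hb Py eps Heps. destruct (Mtest_unif u m P K0 Hm Hb eps Heps) as [N HN].
  exists N. intros n Hn. unfold Rdist. rewrite Rabs_minus_sym. apply HN; auto.
Qed.

Definition beta (Z : nat -> option C) k :=
  match Z k with Some al => Re al / (1 + (Im al) ^ 2) | None => 0 end.

Lemma one_plus_sq t b : 1 + b^2 <= 2 * (1 + t^2) * (1 + (t - b)^2).
Proof. assert (0 <= (t + (t - b))^2) by apply pow2_ge_0. assert (0 <= t^2 * (t-b)^2) by (apply Rmult_le_pos; apply pow2_ge_0). nra. Qed.

Lemma frac_le a x y : 0 <= a -> 0 < x -> x <= y -> a / y <= a / x.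
Proof. intros. unfold Rdiv. apply Rmult_le_compat_l; auto. apply Rinv_le_contravar; auto. Qed.

Lemma beta_pos Z (HZ : zeros_in_C0 Z) k : 0 <= beta Z k.
Proof.
  unfold beta. destruct (Z k) eqn:E; [|lra]. specialize (HZ k c E).
  apply Rdiv_le_0_compat; [lra|]. pose proof (pow2_ge_0 (Im c)); lra.
Qed.

Lemma core_bound p a d t s :
  0 < p -> p <= s -> 0 < a -> d <> 0 -> (1 <= Rabs d \/ a <= p/2) ->
  2 * a / D1 a d s <= (4 * (1 + t^2) / Rmin (p^2/4) (1/2)) * (a / (1 + (t - d)^2)).
Proof.
  intros Hp Hs Ha Hd Hc.
  set (c := Rmin (p^2/4) (1/2)).
  assert (Hc1 : c <= p^2/4) by apply Rmin_l. assert (Hc2 : c <= 1/2) by apply Rmin_r.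
  assert (Hc0 : 0 < c) by (apply Rmin_glb_lt; nra).
  assert (HD : c * (1 + d^2) <= D1 a d s).
  { unfold D1. destruct Hc as [H|H].
    - assert (1 <= d^2) by (rewrite <- (pow2_abs d); nra). pose proof (pow2_ge_0 (s-a)). nra.
    - assert (p^2/4 <= (s-a)^2) by nra. pose proof (pow2_ge_0 d). nra. }
  pose proof (one_plus_sq t (t - d)) as E. replace (t - (t - d)) with d in E by ring.
  pose proof (pow2_ge_0 d). pose proof (pow2_ge_0 (t-d)). pose proof (pow2_ge_0 t).
  apply Rle_trans with (2 * a / (c * (1 + d^2))).
  { apply frac_le; nra. }
  replace (2 * a / (c * (1 + d^2))) with ((2/c) * (a / (1 + d^2))) by (field; nra).
  replace (4 * (1 + t ^ 2) / c * (a / (1 + (t - d) ^ 2))) with ((2/c) * (2*(1+t^2)*a / (1 + (t - d) ^ 2))) by (field; nra).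
  apply Rmult_le_compat_l. apply Rdiv_le_0_compat; lra.
  apply (Rmult_le_reg_r ((1 + d^2) * (1 + (t-d)^2))). nra.
  replace (a / (1 + d ^ 2) * ((1 + d ^ 2) * (1 + (t - d) ^ 2))) with (a * (1 + (t-d)^2)) by (field; nra).
  replace (2 * (1 + t ^ 2) * a / (1 + (t - d) ^ 2) * ((1 + d ^ 2) * (1 + (t - d) ^ 2))) with (a * (2 * (1 + t ^ 2) * (1 + d^2))) by (field; nra).
  apply Rmult_le_compat_l; lra.
Qed.

Lemma local_bound Z t (HZ : zeros_in_C0 Z) (Hl : forall n a, Z n = Some a -> Im a <> t)
  (Hbl : blaschke_cond Z) p : 0 < p ->
  exists K0 C, 0 <= C /\ forall k s, (K0 <= k)%nat -> p <= s ->
    Rabs (zt Z t dpsi1 k s) <= C * beta Z k /\ Rabs (zt Z t dpsi2 k s) <= C * beta Z k.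
Proof.
  intros Hp.
  set (eta := (p/2) / (1 + (Rabs t + 1)^2)).
  assert (Heta : 0 < eta) by (unfold eta; apply Rdiv_lt_0_compat; [lra| pose proof (pow2_ge_0 (Rabs t + 1)); lra]).
  pose proof (ex_series_lim_0 _ Hbl) as L. apply is_lim_seq_spec in L.
  destruct (L (mkposreal eta Heta)) as [K0 HK]. simpl in HK.
  set (c := Rmin (p^2/4) (1/2)).
  assert (Hc0 : 0 < c) by (apply Rmin_glb_lt; nra).
  exists K0, (4 * (1 + t^2) / c). split.
  { apply Rdiv_le_0_compat; [pose proof (pow2_ge_0 t); lra | lra]. }
  intros k s Hk Hs. specialize (HK k Hk). rewrite Rminus_0_r in HK.
  unfold zt, beta in *. destruct (Z k) as [[a b]|] eqn:E.
  2:{ rewrite Rabs_R0, Rmult_0_r. lra. }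
  unfold Re, Im in *; cbn [fst snd] in *. pose proof (HZ k (a,b) E) as Ha. pose proof (Hl k (a,b) E) as Hb. unfold Re, Im in Ha, Hb; cbn [fst snd] in Ha, Hb.
  assert (Hd : t - b <> 0) by lra.
  assert (Hcase : 1 <= Rabs (t - b) \/ a <= p/2).
  { destruct (Rle_or_lt 1 (Rabs (t-b))) as [H|H]; [left; auto| right].
    assert (Hb1 : Rabs b <= Rabs t + 1).
    { replace b with (t - (t - b)) by ring. eapply Rle_trans. apply Rabs_triang. rewrite Rabs_Ropp. lra. }
    assert (b^2 <= (Rabs t + 1)^2) by (rewrite <- (pow2_abs b); pose proof (Rabs_pos b); nra).
    rewrite Rabs_pos_eq in HK by (apply Rdiv_le_0_compat; [lra| pose proof (pow2_ge_0 b); lra]).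
    assert (a / (1 + (Rabs t + 1)^2) <= a / (1 + b^2)) by (apply frac_le; [lra | pose proof (pow2_ge_0 b); lra | lra]).
    unfold eta in HK. try replace (b * (b * 1)) with (b^2) in HK by ring. assert (a / (1 + (Rabs t + 1) ^ 2) < p / 2 / (1 + (Rabs t + 1) ^ 2)) by lra.
    unfold Rdiv in H2. apply Rmult_lt_reg_r in H2. lra. apply Rinv_0_lt_compat. pose proof (pow2_ge_0 (Rabs t + 1)); lra. }
  pose proof (core_bound p a (t - b) t s Hp Hs Ha Hd Hcase) as CB.
  replace (t - (t - b)) with b in CB by ring. fold c in CB.
  split; eapply Rle_trans; [apply dpsi1_bound; lra| apply CB | apply dpsi2_bound; lra | apply CB].
Qed.

Lemma Hf_global Z t (HZ : zeros_in_C0 Z) (Hl : forall n a, Z n = Some a -> Im a <> t) k s :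
  Rabs (zt Z t Hf k s) <= (2 * PI + 3/2 * s^2) * (2 * (1 + t^2)) * beta Z k.
Proof.
  unfold zt, beta. destruct (Z k) as [[a b]|] eqn:E.
  2:{ rewrite Rabs_R0, Rmult_0_r. lra. }
  unfold Re, Im in *; cbn [fst snd] in *. pose proof (HZ k (a,b) E) as Ha. pose proof (Hl k (a,b) E) as Hb. unfold Re, Im in Ha, Hb; cbn [fst snd] in Ha, Hb.
  assert (Hd : t - b <> 0) by lra. set (d := t - b) in *.
  pose proof (one_plus_sq t b) as E1. fold d in E1.
  pose proof (pow2_ge_0 d). pose proof (pow2_ge_0 b). pose proof (pow2_ge_0 t). pose proof (pow2_ge_0 s).
  pose proof PI_RGT_0.
  assert (A : Rabs (Hf a d s) <= (2 * PI + 3/2 * s^2) * (a / (1 + d^2))).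
  { destruct (Rle_or_lt 1 (Rabs d)) as [Hq|Hq].
    - assert (1 <= d^2) by (rewrite <- (pow2_abs d); nra).
      eapply Rle_trans. apply Hf_abs_quad; auto.
      apply Rle_trans with (3/2 * s^2 * (a / (1 + d^2))).
      + replace (3 / 4 * s ^ 2 * a / d ^ 2) with (3/4 * s^2 * a * / d^2) by (field; lra).
        replace (3/2 * s^2 * (a / (1 + d^2))) with (3/4 * s^2 * a * (2 / (1 + d^2))) by (field; lra).
        apply Rmult_le_compat_l. assert (0 <= s^2 * a) by nra. lra.
        apply (Rmult_le_reg_r (d^2 * (1+d^2))). nra.
        replace (/ d ^ 2 * (d ^ 2 * (1 + d ^ 2))) with (1 + d^2) by (field; lra).
        replace (2 / (1 + d ^ 2) * (d ^ 2 * (1 + d ^ 2))) with (2 * d^2) by (field; lra). lra.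
      + apply Rmult_le_compat_r. apply Rdiv_le_0_compat; lra. lra.
    - assert (d^2 <= 1) by (rewrite <- (pow2_abs d); pose proof (Rabs_pos d); nra).
      eapply Rle_trans. apply Hf_abs_pi; auto.
      apply Rle_trans with (2 * PI * (a / (1 + d^2))).
      + replace (2 * PI * (a / (1 + d^2))) with (PI * a * (2 / (1 + d^2))) by (field; lra).
        rewrite <- (Rmult_1_r (PI * a)) at 1. apply Rmult_le_compat_l. nra.
        apply (Rmult_le_reg_r (1+d^2)). lra. replace (2 / (1 + d ^ 2) * (1 + d ^ 2)) with 2 by (field; lra). lra.
      + apply Rmult_le_compat_r. apply Rdiv_le_0_compat; lra. nra. }
  eapply Rle_trans. apply A. rewrite Rmult_assoc. apply Rmult_le_compat_l. nra.
  apply (Rmult_le_reg_r ((1 + d^2) * (1 + b^2))). nra.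
  replace (a / (1 + d ^ 2) * ((1 + d ^ 2) * (1 + b ^ 2))) with (a * (1 + b^2)) by (field; nra).
  replace (2 * (1 + t ^ 2) * (a / (1 + b ^ 2)) * ((1 + d ^ 2) * (1 + b ^ 2))) with (a * (2 * (1 + t ^ 2) * (1 + d^2))) by (field; nra).
  apply Rmult_le_compat_l; lra.
Qed.

Definition S1 Z t s := Series (fun k => zt Z t dpsi1 k s).
Definition S2 Z t s := Series (fun k => zt Z t dpsi2 k s).
Definition Kf Z t s := Series (fun k => zt Z t Hf k s).
Definition sdpsi2 a d s := s * dpsi2 a d s.
Definition Dl1 Z t x s := Series (fun k => zt Z t psi1 k s - zt Z t psi1 k x).
Definition Dl2 Z t x s := Series (fun k => zt Z t psi2 k s - zt Z t psi2 k x).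

Definition HlineP (Z : nat -> option C) (t : R) := forall n a, Z n = Some a -> Im a <> t.

Lemma zt_der Z t f df (Hder : forall a d s, d <> 0 -> is_derive (f a d) s (df a d s))
  (Hl : HlineP Z t) k s : is_derive (fun y => zt Z t f k y) s (zt Z t df k s).
Proof.
  unfold zt. destruct (Z k) as [al|] eqn:E.
  - apply Hder. specialize (Hl k al E). unfold Im in Hl. lra.
  - apply is_derive_Reals, derivable_pt_lim_const.
Qed.

Lemma dpsi1_ex a d s : d <> 0 -> ex_derive (dpsi1 a d) s.
Proof. intros Hd. prep a d s Hd. unfold dpsi1, D1, D2 in *. auto_derive. rewrite ?Rmult_1_r. repeat split; lra. Qed.
Lemma dpsi2_ex a d s : d <> 0 -> ex_derive (dpsi2 a d) s.
Proof. intros Hd. prep a d s Hd. unfold dpsi2, D1, D2 in *. auto_derive. rewrite ?Rmult_1_r. repeat split; lra. Qed.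
Lemma sdpsi2_ex a d s : d <> 0 -> ex_derive (sdpsi2 a d) s.
Proof. intros Hd. prep a d s Hd. unfold sdpsi2, dpsi2, D1, D2 in *. auto_derive. rewrite ?Rmult_1_r. repeat split; lra. Qed.

Lemma zt_cont Z t f (Hex : forall a d s, d <> 0 -> ex_derive (f a d) s)
  (Hl : HlineP Z t) k s : continuity_pt (fun y => zt Z t f k y) s.
Proof.
  apply continuity_pt_filterlim.
  apply (ex_derive_continuous (K:=R_AbsRing) (V:=R_NormedModule)).
  unfold zt. destruct (Z k) as [al|] eqn:E.
  - apply Hex. specialize (Hl k al E). unfold Im in Hl. lra.
  - exists 0. apply is_derive_Reals, derivable_pt_lim_const.
Qed.

Lemma psum_der (u du : nat -> R -> R) n s :
  (forall k, is_derive (u k) s (du k s)) ->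
  is_derive (fun y => psum (fun k => u k y) n) s (psum (fun k => du k s) n).
Proof.
  intros H. induction n; simpl.
  - apply is_derive_Reals, derivable_pt_lim_const.
  - apply (is_derive_plus (fun y => psum (fun k => u k y) n) (u n)); auto.
Qed.

Lemma psum_cont (u : nat -> R -> R) n s :
  (forall k, continuity_pt (u k) s) -> continuity_pt (fun y => psum (fun k => u k y) n) s.
Proof.
  intros H. induction n; simpl.
  - apply continuity_pt_const. intros a b; auto.
  - apply (continuity_pt_plus (fun y => psum (fun k => u k y) n) (u n)); auto.
Qed.

Lemma psum_cv a : ex_series a -> Un_cv (psum a) (Series a).
Proof. intros H. apply is_lim_seq_Reals. apply psum_lim; auto. Qed.

Lemma ex_series_mulR (c : R) (a : nat -> R) : ex_series a -> ex_series (fun k => c * a k).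
Proof. intros H. eapply (ex_series_ext (K:=R_AbsRing) (V:=R_NormedModule)). 2: apply (ex_series_scal_r c a H). intros n; simpl; ring. Qed.

Definition half (x : R) (Hx : 0 < x) : posreal := mkposreal (x/2) ltac:(lra).

Lemma Boule_half x Hx y : Boule x (half x Hx) y -> x/2 < y < 3*x/2.
Proof. unfold Boule, half; simpl. intros H. apply Rabs_def2 in H. lra. Qed.


Lemma CVU_all Z t (HZ : zeros_in_C0 Z) (Hl : HlineP Z t) (Hbl : blaschke_cond Z) x (Hx : 0 < x) :
  CVU (fun n y => psum (fun k => zt Z t dpsi1 k y) n) (S1 Z t) x (half x Hx) /\
  CVU (fun n y => psum (fun k => zt Z t dpsi2 k y) n) (S2 Z t) x (half x Hx) /\
  CVU (fun n y => psum (fun k => zt Z t sdpsi2 k y) n) (fun y => Series (fun k => zt Z t sdpsi2 k y)) x (half x Hx).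
Proof.
  destruct (local_bound Z t HZ Hl Hbl (x/2) ltac:(lra)) as [K0 [Cb [HC HB]]].
  assert (Hm : ex_series (fun k => Cb * beta Z k)) by (apply ex_series_mulR; exact Hbl).
  assert (Hm' : ex_series (fun k => (3*x/2) * (Cb * beta Z k))) by (apply ex_series_mulR; auto).
  split; [|split].
  - apply (Mtest_CVU _ _ _ _ K0 Hm). intros k y Hk Hy. apply Boule_half in Hy. apply HB; auto; lra.
  - apply (Mtest_CVU _ _ _ _ K0 Hm). intros k y Hk Hy. apply Boule_half in Hy. apply HB; auto; lra.
  - apply (Mtest_CVU _ _ _ _ K0 Hm'). intros k y Hk Hy. apply Boule_half in Hy.
    assert (E : zt Z t sdpsi2 k y = y * zt Z t dpsi2 k y) by (unfold zt, sdpsi2; destruct (Z k); ring).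
    rewrite E, Rabs_mult, Rabs_pos_eq by lra. apply Rmult_le_compat; try lra. apply Rabs_pos.
    apply HB; auto; lra.
Qed.

Lemma sdpsi2_eq Z t y : Series (fun k => zt Z t sdpsi2 k y) = y * S2 Z t y.
Proof.
  unfold S2. rewrite <- Series_scal_l. apply Series_ext. intros k. unfold zt, sdpsi2. destruct (Z k); ring.
Qed.

Lemma S_cont Z t (HZ : zeros_in_C0 Z) (Hl : HlineP Z t) (Hbl : blaschke_cond Z) x (Hx : 0 < x) :
  continuity_pt (S1 Z t) x /\ continuity_pt (S2 Z t) x /\
  forall y, Boule x (half x Hx) y ->
   continuity_pt (S1 Z t) y /\ continuity_pt (S2 Z t) y /\ continuity_pt (fun y => Series (fun k => zt Z t sdpsi2 k y)) y.
Proof.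
  destruct (CVU_all Z t HZ Hl Hbl x Hx) as [C1 [C2 C3]].
  assert (G : forall y, Boule x (half x Hx) y ->
   continuity_pt (S1 Z t) y /\ continuity_pt (S2 Z t) y /\ continuity_pt (fun y => Series (fun k => zt Z t sdpsi2 k y)) y).
  { intros y Hy. split; [|split].
    - eapply CVU_continuity; eauto. intros n z _. apply psum_cont. intros k. apply zt_cont; auto. apply dpsi1_ex.
    - eapply CVU_continuity; eauto. intros n z _. apply psum_cont. intros k. apply zt_cont; auto. apply dpsi2_ex.
    - eapply CVU_continuity with (fn := fun n y => psum (fun k => zt Z t sdpsi2 k y) n); eauto.
      intros n z _. apply psum_cont. intros k. apply zt_cont; auto. apply sdpsi2_ex. }
  destruct (G x (Boule_center x _)) as [A [B _]]. auto.
Qed.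

Lemma Kf_cv Z t (HZ : zeros_in_C0 Z) (Hl : HlineP Z t) (Hbl : blaschke_cond Z) y :
  Un_cv (fun n => psum (fun k => zt Z t Hf k y) n) (Kf Z t y).
Proof.
  apply (Mtest_cv (fun k y => zt Z t Hf k y) (fun k => (2 * PI + 3/2 * y^2) * (2 * (1 + t^2)) * beta Z k) (fun z => z = y) 0).
  - apply ex_series_mulR; auto.
  - intros k z _ ->. apply Hf_global; auto.
  - auto.
Qed.

Lemma Kf_der Z t (HZ : zeros_in_C0 Z) (Hl : HlineP Z t) (Hbl : blaschke_cond Z) x (Hx : 0 < x) :
  is_derive (Kf Z t) x (x * S2 Z t x).
Proof.
  apply is_derive_Reals. rewrite <- sdpsi2_eq.
  destruct (CVU_all Z t HZ Hl Hbl x Hx) as [_ [_ C3]].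
  destruct (S_cont Z t HZ Hl Hbl x Hx) as [_ [_ G]].
  apply (derivable_pt_lim_CVU (fun n y => psum (fun k => zt Z t Hf k y) n)
          (fun n y => psum (fun k => zt Z t sdpsi2 k y) n) (Kf Z t)
          (fun y => Series (fun k => zt Z t sdpsi2 k y)) x x (half x Hx)).
  - apply Boule_center.
  - intros y n _. apply is_derive_Reals. apply psum_der. intros k. apply zt_der; auto. apply Hf_der.
  - intros y _. apply Kf_cv; auto.
  - auto.
  - intros y Hy. apply G; auto.
Qed.

Lemma Kf_0 Z t (Hl : HlineP Z t) : Kf Z t 0 = 0.
Proof.
  unfold Kf. transitivity (Series (fun k : nat => 0 * 0)).
  2:{ rewrite Series_scal_l. ring. }
  apply Series_ext. intros k.
  unfold zt. destruct (Z k) eqn:E; [|ring]. rewrite Rmult_0_l. apply Hf_0. specialize (Hl k c E). unfold Im in Hl. lra.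
Qed.

Lemma Kf_cont0 Z t (HZ : zeros_in_C0 Z) (Hl : HlineP Z t) (Hbl : blaschke_cond Z) :
  continuity_pt (Kf Z t) 0.
Proof.
  apply (CVU_continuity (fun n y => psum (fun k => zt Z t Hf k y) n) (Kf Z t) 0 (mkposreal 1 Rlt_0_1)).
  - apply (Mtest_CVU _ (fun k => (2 * PI + 3/2) * (2 * (1 + t^2)) * beta Z k) _ _ 0).
    + apply ex_series_mulR; auto.
    + intros k y _ Hy. unfold Boule in Hy; simpl in Hy. rewrite Rminus_0_r in Hy.
      eapply Rle_trans. apply Hf_global; auto.
      assert (y^2 <= 1) by (rewrite <- (pow2_abs y); pose proof (Rabs_pos y); nra).
      pose proof (beta_pos Z HZ k). pose proof (pow2_ge_0 t).
      apply Rmult_le_compat_r; auto. apply Rmult_le_compat_r. lra. lra.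
  - intros n y _. apply psum_cont. intros k. apply zt_cont; auto.
    intros a d s Hd. eexists. apply Hf_der; auto.
  - apply Boule_center.
Qed.

Lemma diff_bound (f df : R -> R) x s Cb : 
  (forall y, is_derive f y (df y)) ->
  (forall y, Rmin x s <= y <= Rmax x s -> Rabs (df y) <= Cb) ->
  Rabs (f s - f x) <= Cb * Rabs (s - x).
Proof.
  intros Hd Hb. destruct (MVT_gen f x s df) as [c [Hc E]].
  - intros; apply Hd.
  - intros; eapply cont_of_der; apply Hd.
  - rewrite E, Rabs_mult. apply Rmult_le_compat_r. apply Rabs_pos. apply Hb; auto.
Qed.

Lemma der_minus_const (f : R -> R) c y df : is_derive f y df -> is_derive (fun z => f z - c) y df.
Proof. intros H. apply is_derive_Reals in H. apply is_derive_Reals. replace df with (df - 0) by ring.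
  apply (derivable_pt_lim_minus f (fun _ => c)); auto. apply derivable_pt_lim_const. Qed.

Lemma Dl_ex Z t (HZ : zeros_in_C0 Z) (Hl : HlineP Z t) (Hbl : blaschke_cond Z) x s :
  0 < x -> 0 < s ->
  ex_series (fun k => zt Z t psi1 k s - zt Z t psi1 k x) /\
  ex_series (fun k => zt Z t psi2 k s - zt Z t psi2 k x).
Proof.
  intros Hx Hs. assert (Hp : 0 < Rmin x s) by (apply Rmin_glb_lt; auto).
  destruct (local_bound Z t HZ Hl Hbl (Rmin x s) Hp) as [K0 [Cb [HC HB]]].
  assert (Hm : ex_series (fun k => (Cb * Rabs (s - x)) * beta Z k)) by (apply ex_series_mulR; auto).
  split; (eapply (ex_series_tail _ _ K0); [|exact Hm]).
  - intros k Hk. cbv beta. replace (Cb * Rabs (s - x) * beta Z k) with ((Cb * beta Z k) * Rabs (s - x)) by ring.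
    apply (diff_bound (fun y => zt Z t psi1 k y) (fun y => zt Z t dpsi1 k y)).
    + intros y. apply zt_der; auto. apply psi1_der.
    + intros y Hy. apply HB; auto. lra.
  - intros k Hk. cbv beta. replace (Cb * Rabs (s - x) * beta Z k) with ((Cb * beta Z k) * Rabs (s - x)) by ring.
    apply (diff_bound (fun y => zt Z t psi2 k y) (fun y => zt Z t dpsi2 k y)).
    + intros y. apply zt_der; auto. apply psi2_der.
    + intros y Hy. apply HB; auto. lra.
Qed.

Lemma Dl_der Z t (HZ : zeros_in_C0 Z) (Hl : HlineP Z t) (Hbl : blaschke_cond Z) x (Hx : 0 < x) :
  is_derive (Dl1 Z t x) x (S1 Z t x) /\ is_derive (Dl2 Z t x) x (S2 Z t x).
Proof.
  destruct (CVU_all Z t HZ Hl Hbl x Hx) as [C1 [C2 _]].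
  destruct (S_cont Z t HZ Hl Hbl x Hx) as [_ [_ G]].
  split; apply is_derive_Reals.
  - apply (derivable_pt_lim_CVU (fun n y => psum (fun k => zt Z t psi1 k y - zt Z t psi1 k x) n)
          (fun n y => psum (fun k => zt Z t dpsi1 k y) n) (Dl1 Z t x) (S1 Z t) x x (half x Hx)).
    + apply Boule_center.
    + intros y n _. apply is_derive_Reals. apply psum_der. intros k.
      apply der_minus_const. apply zt_der; auto. apply psi1_der.
    + intros y Hy. apply Boule_half in Hy. apply psum_cv. apply Dl_ex; auto; lra.
    + auto.
    + intros y Hy. apply G; auto.
  - apply (derivable_pt_lim_CVU (fun n y => psum (fun k => zt Z t psi2 k y - zt Z t psi2 k x) n)
          (fun n y => psum (fun k => zt Z t dpsi2 k y) n) (Dl2 Z t x) (S2 Z t) x x (half x Hx)).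
    + apply Boule_center.
    + intros y n _. apply is_derive_Reals. apply psum_der. intros k.
      apply der_minus_const. apply zt_der; auto. apply psi2_der.
    + intros y Hy. apply Boule_half in Hy. apply psum_cv. apply Dl_ex; auto; lra.
    + auto.
    + intros y Hy. apply G; auto.
Qed.

Lemma C_lim_comp (u : nat -> C) (l : C) :
  filterlim u eventually (locally l) ->
  is_lim_seq (fun n => fst (u n)) (fst l) /\ is_lim_seq (fun n => snd (u n)) (snd l).
Proof.
  intros H. rewrite filterlim_locally in H.
  split; apply is_lim_seq_spec; intros eps; destruct (H eps) as [N HN]; exists N; intros n Hn;
  destruct (HN n Hn) as [H1 H2]; auto.
Qed.

Lemma lim_identity Z t (HZ : zeros_in_C0 Z) (Hl : HlineP Z t) (Hbl : blaschke_cond Z)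
  (B : C -> C) (HB : is_blaschke_product Z B) x s : 0 < x -> 0 < s ->
  B (s, t) = (B (x, t) * cexp (Dl1 Z t x s) (Dl2 Z t x s))%C.
Proof.
  intros Hx Hs.
  destruct (Dl_ex Z t HZ Hl Hbl x s Hx Hs) as [E1 E2].
  set (d1 := fun N => psum (fun k => zt Z t psi1 k s - zt Z t psi1 k x) N).
  set (d2 := fun N => psum (fun k => zt Z t psi2 k s - zt Z t psi2 k x) N).
  assert (Hd1 : is_lim_seq d1 (Dl1 Z t x s)) by (apply psum_lim; auto).
  assert (Hd2 : is_lim_seq d2 (Dl2 Z t x s)) by (apply psum_lim; auto).
  assert (Eq : forall N, bpartial Z (s, t) N = (bpartial Z (x, t) N * cexp (d1 N) (d2 N))%C).
  { intros N. rewrite !bpartial_cexp by auto. unfold d1, d2. rewrite !psum_minus.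
    rewrite <- Cmult_assoc, cexp_add. f_equal. f_equal; ring. }
  destruct (C_lim_comp _ _ (HB (s,t) Hs)) as [Ls1 Ls2].
  destruct (C_lim_comp _ _ (HB (x,t) Hx)) as [Lx1 Lx2].
  assert (Le1 : is_lim_seq (fun N => exp (d1 N) * cos (d2 N)) (exp (Dl1 Z t x s) * cos (Dl2 Z t x s))).
  { apply is_lim_seq_mult'.
    - apply is_lim_seq_continuous; auto. apply derivable_continuous_pt, derivable_pt_exp.
    - apply is_lim_seq_continuous; auto. apply derivable_continuous_pt, derivable_pt_cos. }
  assert (Le2 : is_lim_seq (fun N => exp (d1 N) * sin (d2 N)) (exp (Dl1 Z t x s) * sin (Dl2 Z t x s))).
  { apply is_lim_seq_mult'.
    - apply is_lim_seq_continuous; auto. apply derivable_continuous_pt, derivable_pt_exp.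
    - apply is_lim_seq_continuous; auto. apply derivable_continuous_pt, derivable_pt_sin. }
  destruct (B (x,t)) as [p q] eqn:EB. simpl in Lx1, Lx2.
  unfold cexp, Cmult. simpl.
  destruct (B (s,t)) as [u v] eqn:ES. simpl in Ls1, Ls2.
  f_equal.
  - apply is_lim_seq_unique in Ls1.
    assert (L : is_lim_seq (fun N => fst (bpartial Z (s, t) N)) (p * (exp (Dl1 Z t x s) * cos (Dl2 Z t x s)) - q * (exp (Dl1 Z t x s) * sin (Dl2 Z t x s)))).
    { eapply is_lim_seq_ext. intros N. rewrite Eq. unfold cexp, Cmult. simpl. reflexivity.
      apply is_lim_seq_minus'; apply is_lim_seq_mult'; auto. }
    apply is_lim_seq_unique in L. rewrite L in Ls1. injection Ls1. intros E. rewrite <- E. ring.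
  - apply is_lim_seq_unique in Ls2. 
    assert (L : is_lim_seq (fun N => snd (bpartial Z (s, t) N)) (p * (exp (Dl1 Z t x s) * sin (Dl2 Z t x s)) + q * (exp (Dl1 Z t x s) * cos (Dl2 Z t x s)))).
    { eapply is_lim_seq_ext. intros N. rewrite Eq. unfold cexp, Cmult. simpl. reflexivity.
      apply is_lim_seq_plus'; apply is_lim_seq_mult'; auto. }
    apply is_lim_seq_unique in L. rewrite L in Ls2. injection Ls2. intros E. rewrite <- E. ring.
Qed.

Lemma cderiv_aux (B : C -> C) (x t : R) (l : C) :
  @is_derive C_AbsRing C_NormedModule B (x, t) l ->
  forall eps : posreal, exists del : posreal, forall y, Rabs (y - x) < del ->
   Cmod ((fst (B (y, t)) - fst (B (x, t)) - (y - x) * fst l,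
          snd (B (y, t)) - snd (B (x, t)) - (y - x) * snd l)) <= eps * Rabs (y - x).
Proof.
  intros [_ Hd] eps. specialize (Hd (x,t) (fun P H => H)).
  destruct (Hd eps) as [del Hdel]. exists del. intros y Hy.
  assert (Hb : @ball (AbsRing_UniformSpace C_AbsRing) (x, t) del (y, t)).
  { unfold ball; simpl; unfold AbsRing_ball; unfold abs, minus, plus, opp; simpl.
    unfold Cplus, Copp; simpl. replace (t + - t) with 0 by ring.
    change ((y + - x, 0)) with (RtoC (y + -x)). rewrite Cmod_R. exact Hy. }
  specialize (Hdel (y, t) Hb).
  unfold norm, minus, plus, opp, scal, mult in Hdel; simpl in Hdel.
  unfold abs in Hdel; simpl in Hdel. unfold Cmult, Cplus, Copp in Hdel; simpl in Hdel.
  replace (t + - t) with 0 in Hdel by ring.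
  change ((y + - x, 0)) with (RtoC (y + -x)) in Hdel. rewrite Cmod_R in Hdel.
  replace (fst (B (y, t)) - fst (B (x, t)) - (y - x) * fst l) with
     (fst (B (y, t)) + - fst (B (x, t)) + - ((y + - x) * fst l - 0 * snd l)) by ring.
  replace (snd (B (y, t)) - snd (B (x, t)) - (y - x) * snd l) with
     (snd (B (y, t)) + - snd (B (x, t)) + - ((y + - x) * snd l + 0 * fst l)) by ring.
  replace (y - x) with (y + - x) by ring. exact Hdel.
Qed.

Lemma deriv_from_bound (f : R -> R) x L :
  (forall eps : posreal, exists del : posreal, forall y, Rabs (y - x) < del ->
     Rabs (f y - f x - (y - x) * L) <= eps * Rabs (y - x)) ->
  is_derive f x L.
Proof.
  intros H. apply is_derive_Reals. intros eps Heps.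
  destruct (H (mkposreal (eps/2) ltac:(lra))) as [del Hdel]. exists del.
  intros h Hh Hhd. specialize (Hdel (x + h)). replace (x + h - x) with h in Hdel by ring.
  specialize (Hdel Hhd). simpl in Hdel.
  replace ((f (x + h) - f x) / h - L) with ((f (x + h) - f x - h * L) / h) by (field; auto).
  unfold Rdiv. rewrite Rabs_mult, Rabs_inv.
  apply (Rmult_lt_reg_r (Rabs h)). apply Rabs_pos_lt; auto.
  rewrite Rmult_assoc, Rinv_l by (apply Rabs_no_R0; auto). pose proof (Rabs_pos_lt h Hh). nra.
Qed.

Lemma cderiv_real (B : C -> C) (x t : R) (l : C) :
  @is_derive C_AbsRing C_NormedModule B (x, t) l ->
  is_derive (fun y => fst (B (y, t))) x (fst l) /\ is_derive (fun y => snd (B (y, t))) x (snd l).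
Proof.
  intros H. pose proof (cderiv_aux B x t l H) as A. split; apply deriv_from_bound; intros eps;
  destruct (A eps) as [del Hdel]; exists del; intros y Hy; eapply Rle_trans; try apply (Hdel y Hy).
  - pose proof (re_le_Cmod (fst (B (y, t)) - fst (B (x, t)) - (y - x) * fst l,
          snd (B (y, t)) - snd (B (x, t)) - (y - x) * snd l)). unfold Re in H0; simpl in H0. exact H0.
  - pose proof (Rmax_Cmod (fst (B (y, t)) - fst (B (x, t)) - (y - x) * fst l,
          snd (B (y, t)) - snd (B (x, t)) - (y - x) * snd l)). simpl in H0.
    eapply Rle_trans; [apply Rmax_r | exact H0].
Qed.

Lemma Dl_at_x Z t x : Dl1 Z t x x = 0 /\ Dl2 Z t x x = 0.
Proof.
  unfold Dl1, Dl2. split; (transitivity (Series (fun k : nat => 0 * 0));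
    [apply Series_ext; intros; ring | rewrite Series_scal_l; ring]).
Qed.

Lemma expcs_der (g1 g2 : R -> R) x d1 d2 : is_derive g1 x d1 -> is_derive g2 x d2 -> g1 x = 0 -> g2 x = 0 ->
  is_derive (fun y => exp (g1 y) * cos (g2 y)) x d1 /\ is_derive (fun y => exp (g1 y) * sin (g2 y)) x d2.
Proof.
  intros H1 H2 E1 E2. split.
  - auto_derive. split; [eexists; eauto | split; [eexists; eauto | auto]].
    replace (Derive (fun x0 => g1 x0) x) with d1 by (symmetry; apply is_derive_unique; auto).
    replace (Derive (fun x0 => g2 x0) x) with d2 by (symmetry; apply is_derive_unique; auto).
    rewrite E1, E2, exp_0, cos_0, sin_0. ring.
  - auto_derive. split; [eexists; eauto | split; [eexists; eauto | auto]].
    replace (Derive (fun x0 => g1 x0) x) with d1 by (symmetry; apply is_derive_unique; auto).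
    replace (Derive (fun x0 => g2 x0) x) with d2 by (symmetry; apply is_derive_unique; auto).
    rewrite E1, E2, exp_0, cos_0, sin_0. ring.
Qed.

Lemma locally_pos x : 0 < x -> locally x (fun y => 0 < y).
Proof.
  intros Hx. exists (mkposreal (x/2) ltac:(lra)). intros y Hy.
  unfold ball in Hy; simpl in Hy; unfold AbsRing_ball, abs, minus, plus, opp in Hy; simpl in Hy.
  apply Rabs_def2 in Hy. lra.
Qed.

Lemma Bder_eq Z t (HZ : zeros_in_C0 Z) (Hl : HlineP Z t) (Hbl : blaschke_cond Z)
  (B B' : C -> C) (HB : is_blaschke_product Z B)
  (HB' : forall s : C, 0 < Re s -> @is_derive C_AbsRing C_NormedModule B s (B' s)) x :
  0 < x -> B' (x, t) = (B (x, t) * (S1 Z t x, S2 Z t x))%C.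
Proof.
  intros Hx.
  destruct (cderiv_real B x t (B' (x,t)) (HB' (x,t) Hx)) as [R1 R2].
  destruct (Dl_der Z t HZ Hl Hbl x Hx) as [G1 G2].
  destruct (Dl_at_x Z t x) as [E1 E2].
  destruct (expcs_der _ _ x _ _ G1 G2 E1 E2) as [Dc Ds].
  assert (Id : forall y, 0 < y -> B (y, t) = (B (x, t) * cexp (Dl1 Z t x y) (Dl2 Z t x y))%C)
    by (intros; apply lim_identity; auto).
  destruct (B (x, t)) as [p q] eqn:EB.
  assert (F1 : is_derive (fun y => fst (B (y, t))) x (p * S1 Z t x - q * S2 Z t x)).
  { eapply is_derive_ext_loc.
    2:{ apply (is_derive_minus (fun y => p * (exp (Dl1 Z t x y) * cos (Dl2 Z t x y)))
                (fun y => q * (exp (Dl1 Z t x y) * sin (Dl2 Z t x y)))).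
        apply (is_derive_scal (fun y => exp (Dl1 Z t x y) * cos (Dl2 Z t x y))); auto.
        apply (is_derive_scal (fun y => exp (Dl1 Z t x y) * sin (Dl2 Z t x y))); auto. }
    generalize (locally_pos x Hx). apply filter_imp. intros y Hy. cbv beta. rewrite Id; [|exact Hy].
    unfold cexp, Cmult; simpl. unfold minus, plus, opp; simpl. ring. }
  assert (F2 : is_derive (fun y => snd (B (y, t))) x (p * S2 Z t x + q * S1 Z t x)).
  { eapply is_derive_ext_loc.
    2:{ apply (is_derive_plus (fun y => p * (exp (Dl1 Z t x y) * sin (Dl2 Z t x y)))
                (fun y => q * (exp (Dl1 Z t x y) * cos (Dl2 Z t x y)))).
        apply (is_derive_scal (fun y => exp (Dl1 Z t x y) * sin (Dl2 Z t x y))); auto.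
        apply (is_derive_scal (fun y => exp (Dl1 Z t x y) * cos (Dl2 Z t x y))); auto. }
    generalize (locally_pos x Hx). apply filter_imp. intros y Hy. cbv beta. rewrite Id; [|exact Hy].
    unfold cexp, Cmult; simpl. unfold plus; simpl. ring. }
  apply is_derive_unique in R1. apply is_derive_unique in R2.
  apply is_derive_unique in F1. apply is_derive_unique in F2.
  destruct (B' (x,t)) as [l1 l2]. simpl in *. unfold Cmult; simpl. f_equal.
  - rewrite <- R1, F1. unfold minus, plus, opp, scal, mult; simpl. ring.
  - rewrite <- R2, F2. unfold plus, scal, mult; simpl. ring.
Qed.

Definition wterm (Z : nat -> option C) tau k :=
  match Z k with
  | Some a => if Rle_dec tau (Im a) then if Rle_dec (Im a) (tau + 1) then Re a else 0 else 0
  | None => 0 end.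

Lemma window_S Z tau n : window_sum Z tau (S n) = window_sum Z tau n + wterm Z tau n.
Proof. reflexivity. Qed.

Lemma wterm_pos Z (HZ : zeros_in_C0 Z) tau k : 0 <= wterm Z tau k.
Proof.
  unfold wterm. destruct (Z k) eqn:E; [|lra]. pose proof (HZ k c E).
  destruct (Rle_dec _ _); [destruct (Rle_dec _ _)|]; lra.
Qed.

Lemma sum_ge_term (f : nat -> R) n j : (forall i, 0 <= f i) -> (j <= n)%nat -> f j <= sum_f_R0 f n.
Proof.
  intros Hf Hj. induction n.
  - assert (j = 0%nat) by lia. subst. simpl. lra.
  - simpl. destruct (Nat.eq_dec j (S n)) as [->|Hne]. pose proof (cond_pos_sum f n Hf). lra.
    assert (j <= n)%nat by lia. pose proof (Hf (S n)). specialize (IHn H). lra.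
Qed.

Definition cj (g : R) (j : nat) := match j with O => PI | _ => 3/4 * g^2 / (INR j)^2 end.

Lemma cj_pos g j : 0 <= cj g j.
Proof.
  destruct j; unfold cj. pose proof PI_RGT_0; lra.
  apply Rdiv_le_0_compat. pose proof (pow2_ge_0 g); lra. apply pow2_gt_0. pose proof (pos_INR j). rewrite S_INR. lra.
Qed.

Definition WW Z t g J N := sum_f_R0 (fun j => cj g j * (window_sum Z (t + INR j) N + window_sum Z (t - INR j - 1) N)) J.

Lemma per_zero Z t (HZ : zeros_in_C0 Z) (Hl : HlineP Z t) g J k :
  (forall al, Z k = Some al -> Rabs (t - Im al) <= INR J) ->
  Rabs (zt Z t Hf k g) <= sum_f_R0 (fun j => cj g j * (wterm Z (t + INR j) k + wterm Z (t - INR j - 1) k)) J.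
Proof.
  intros HJ.
  assert (Hnn : forall i, 0 <= cj g i * (wterm Z (t + INR i) k + wterm Z (t - INR i - 1) k)).
  { intros i. apply Rmult_le_pos. apply cj_pos. pose proof (wterm_pos Z HZ (t + INR i) k). pose proof (wterm_pos Z HZ (t - INR i - 1) k). lra. }
  unfold zt. destruct (Z k) as [[a b]|] eqn:E.
  2:{ rewrite Rabs_R0. apply cond_pos_sum. auto. }
  specialize (HJ _ eq_refl). unfold Im in HJ; simpl in HJ.
  pose proof (HZ k (a,b) E) as Ha. pose proof (Hl k (a,b) E) as Hb. unfold Re, Im in Ha, Hb; simpl in Ha, Hb.
  simpl. set (d := t - b) in *. assert (Hd : d <> 0) by (unfold d; lra).
  destruct (nfloor_ex (Rabs d) (Rabs_pos d)) as [j0 [Hj1 Hj2]].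
  assert (Hj0 : (j0 <= J)%nat) by (apply INR_le; lra).
  eapply Rle_trans. 2: apply (sum_ge_term _ J j0 Hnn Hj0).
  assert (Hw : a <= wterm Z (t + INR j0) k + wterm Z (t - INR j0 - 1) k).
  { unfold wterm. rewrite E. unfold Re, Im; simpl.
    pose proof (wterm_pos Z HZ (t + INR j0) k) as W1. pose proof (wterm_pos Z HZ (t - INR j0 - 1) k) as W2.
    unfold wterm in W1, W2. rewrite E in W1, W2. unfold Re, Im in W1, W2; simpl in W1, W2.
    destruct (Rle_or_lt 0 d) as [Hp|Hn].
    - rewrite Rabs_pos_eq in Hj1, Hj2 by lra. unfold d in *.
      destruct (Rle_dec (t - INR j0 - 1) b); [|lra]. destruct (Rle_dec b (t - INR j0 - 1 + 1)); [|lra]. lra.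
    - rewrite Rabs_left in Hj1, Hj2 by lra. unfold d in *.
      destruct (Rle_dec (t + INR j0) b); [|lra]. destruct (Rle_dec b (t + INR j0 + 1)); [|lra]. lra. }
  apply Rle_trans with (cj g j0 * a).
  2:{ apply Rmult_le_compat_l; auto. apply cj_pos. }
  destruct j0 as [|j].
  - simpl. apply Hf_abs_pi; auto.
  - eapply Rle_trans. apply Hf_abs_quad; auto. unfold cj.
    assert (Hj : 0 < INR (S j)) by (rewrite S_INR; pose proof (pos_INR j); lra).
    assert (Hdj : (INR (S j))^2 <= d^2) by (rewrite <- (pow2_abs d); nra).
    replace (3 / 4 * g ^ 2 / INR (S j) ^ 2 * a) with (3/4 * g^2 * a / INR (S j) ^ 2) by (field; lra).
    apply frac_le. pose proof (pow2_ge_0 g). nra. nra. auto.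
Qed.

Lemma claimA Z t (HZ : zeros_in_C0 Z) (Hl : HlineP Z t) g N J :
  (forall k al, (k < N)%nat -> Z k = Some al -> Rabs (t - Im al) <= INR J) ->
  psum (fun k => Rabs (zt Z t Hf k g)) N <= WW Z t g J N.
Proof.
  induction N; intros HJ.
  - unfold WW. simpl. apply cond_pos_sum. intros j. simpl. rewrite Rplus_0_r, Rmult_0_r. lra.
  - simpl psum. unfold WW.
    rewrite (sum_eq _ (fun j => cj g j * (window_sum Z (t + INR j) N + window_sum Z (t - INR j - 1) N)
       + cj g j * (wterm Z (t + INR j) N + wterm Z (t - INR j - 1) N))).
    2:{ intros i _. rewrite !window_S. ring. }
    rewrite sum_plus. apply Rplus_le_compat.
    + apply IHN. intros; apply (HJ k); auto.
    + apply per_zero; auto. intros al E. apply (HJ N); auto.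
Qed.

Lemma claimC Z t N : exists J, forall k al, (k < N)%nat -> Z k = Some al -> Rabs (t - Im al) <= INR J.
Proof.
  induction N.
  - exists 0%nat. intros; lia.
  - destruct IHN as [J HJ].
    destruct (Z N) as [al0|] eqn:E.
    + destruct (nfloor_ex (Rabs (t - Im al0)) (Rabs_pos _)) as [j [_ Hj]].
      exists (J + S j)%nat. intros k al Hk Ek. rewrite plus_INR, S_INR.
      pose proof (pos_INR J). pose proof (pos_INR j).
      destruct (Nat.eq_dec k N) as [->|Hne].
      * rewrite E in Ek. injection Ek; intros <-. lra.
      * assert (k < N)%nat by lia. specialize (HJ k al H1 Ek). lra.
    + exists J. intros k al Hk Ek. destruct (Nat.eq_dec k N) as [->|Hne].
      * rewrite E in Ek; discriminate.
      * apply (HJ k); auto; lia.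
Qed.

Lemma inv_sq_sum n : sum_f_R0 (fun j => / (INR j + 1)^2) n <= 2 - / (INR n + 1).
Proof.
  induction n.
  - simpl. lra.
  - rewrite tech5, S_INR. pose proof (pos_INR n).
    assert (/ (INR n + 1 + 1) ^ 2 <= / (INR n + 1) - / (INR n + 1 + 1)).
    { replace (/ (INR n + 1) - / (INR n + 1 + 1)) with (/ ((INR n + 1) * (INR n + 1 + 1))) by (field; lra).
      apply Rinv_le_contravar. nra. nra. }
    lra.
Qed.

Lemma cj_sum g J : sum_f_R0 (cj g) J <= PI + 3/2 * g^2.
Proof.
  pose proof (pow2_ge_0 g).
  destruct J.
  - simpl. lra.
  - rewrite decomp_sum by lia. simpl pred. simpl (cj g 0).
    rewrite (sum_eq _ (fun i => / (INR i + 1)^2 * (3/4 * g^2))).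
    2:{ intros i _. unfold cj. rewrite S_INR. field. pose proof (pos_INR i). lra. }
    rewrite <- scal_sum. pose proof (inv_sq_sum J).
    assert (0 < / (INR J + 1)) by (apply Rinv_0_lt_compat; pose proof (pos_INR J); lra).
    nra.
Qed.

Lemma Kf_bound Z t (HZ : zeros_in_C0 Z) (Hl : HlineP Z t) (Hbl : blaschke_cond Z) g M :
  (forall tau N, window_sum Z tau N <= M) -> Rabs (Kf Z t g) <= (2 * PI + 3 * g^2) * M.
Proof.
  intros HM. assert (HM0 : 0 <= M) by (apply (HM 0 0%nat)).
  assert (Hex : ex_series (fun k => zt Z t Hf k g)).
  { apply (ex_series_tail _ (fun k => (2 * PI + 3/2 * g^2) * (2 * (1 + t^2)) * beta Z k) 0).
    intros; apply Hf_global; auto. apply ex_series_mulR; auto. }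
  pose proof (psum_lim _ Hex) as L. apply is_lim_seq_abs in L.
  assert (Hb : forall N, Rabs (psum (fun k => zt Z t Hf k g) N) <= (2 * PI + 3 * g^2) * M).
  { intros N. destruct (claimC Z t N) as [J HJ].
    apply Rle_trans with (psum (fun k => Rabs (zt Z t Hf k g)) N).
    { clear. induction N; simpl. rewrite Rabs_R0; lra. eapply Rle_trans. apply Rabs_triang. lra. }
    eapply Rle_trans. apply (claimA Z t HZ Hl g N J HJ).
    unfold WW. apply Rle_trans with (sum_f_R0 (fun j => cj g j * (2 * M)) J).
    - apply sum_Rle. intros j _. apply Rmult_le_compat_l. apply cj_pos.
      pose proof (HM (t + INR j) N). pose proof (HM (t - INR j - 1) N). lra.
    - rewrite <- scal_sum. pose proof (cj_sum g J). nra. }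
  pose proof (is_lim_seq_le _ _ _ _ Hb L (is_lim_seq_const ((2 * PI + 3 * g^2) * M))) as LE.
  simpl in LE. exact LE.
Qed.

Lemma cexp_neq0 x y : cexp x y <> 0%C.
Proof.
  intros H. unfold cexp in H. injection H. intros H1 H2.
  pose proof (exp_pos x). pose proof (sin2_cos2 y). unfold Rsqr in *.
  apply Rmult_integral in H1. apply Rmult_integral in H2.
  destruct H1; destruct H2; nra.
Qed.

Lemma Cdiv_mul_l (b w : C) : b <> 0%C -> ((b * w) / b)%C = w.
Proof. intros H. unfold Cdiv. rewrite (Cmult_comm b w), <- Cmult_assoc, Cinv_r by auto. apply Cmult_1_r. Qed.

Lemma Cdiv_0 (z : C) : Im (z / 0)%C = 0.
Proof. unfold Cdiv, Cinv, Cmult, Im; simpl. unfold Rdiv. ring. Qed.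

Theorem lemma3p8 (Z : nat -> option C) (B B' : C -> C)
  (HZ : zeros_in_C0 Z) (Hbl : blaschke_cond Z)
  (HB : is_blaschke_product Z B)
  (HB' : forall s : C, 0 < Re s -> @is_derive C_AbsRing C_NormedModule B s (B' s))
  (gamma t : R) (Hgamma : 0 < gamma)
  (Hline : forall n a, Z n = Some a -> Im a <> t)
  (M : R) (HM : forall (tau : R) (N : nat), window_sum Z tau N <= M) :
  exists I : R,
    filterlim
      (fun eps => RInt (fun sigma => sigma * Im (B' (sigma, t) / B (sigma, t))%C) eps gamma)
      (at_right 0) (locally I)
    /\ Rabs I <= (2 * PI + PI ^ 2 / 3 * gamma ^ 2) * M.
Proof.
  assert (Hl : HlineP Z t) by exact Hline.
  assert (HM0 : 0 <= M) by apply (HM 0 0%nat).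
  assert (Hpi : 3 < PI) by (pose proof PI2_3_2; lra).
  assert (Hcoef : 0 <= 2 * PI + PI ^ 2 / 3 * gamma ^ 2) by (pose proof (pow2_ge_0 gamma); nra).
  assert (Evt : at_right 0 (fun e => 0 < e < gamma)).
  { exists (mkposreal gamma Hgamma). intros y Hy Hy0.
    unfold ball in Hy; simpl in Hy; unfold AbsRing_ball, abs, minus, plus, opp in Hy; simpl in Hy.
    apply Rabs_def2 in Hy. lra. }
  destruct (classic (B (gamma, t) = 0%C)) as [Z0|NZ].
  - exists 0. split.
    + apply (filterlim_ext_loc (fun _ => 0)).
      2: apply filterlim_const.
      generalize Evt. apply filter_imp. intros e He.
      rewrite (RInt_ext _ (fun _ => 0)).
      { rewrite RInt_const. unfold scal; simpl; unfold mult; simpl. ring. }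
      intros x Hx. rewrite Rmin_left in Hx by lra. rewrite Rmax_right in Hx by lra.
      rewrite (lim_identity Z t HZ Hl Hbl B HB gamma x) by lra. rewrite Z0, Cmult_0_l.
      rewrite Cdiv_0. apply Rmult_0_r.
    + rewrite Rabs_R0. apply Rmult_le_pos; auto.
  - exists (Kf Z t gamma). split.
    + assert (Hc : filterlim (fun e => Kf Z t gamma - Kf Z t e) (at_right 0) (locally (Kf Z t gamma))).
      { apply (filterlim_filter_le_1 (F := locally 0) _ (@filter_le_within R (locally 0) (@filter_filter _ _ (locally_filter 0)) (fun u => 0 < u))).
        assert (H0 : filterlim (fun e => Kf Z t gamma - Kf Z t e) (locally 0) (locally (Kf Z t gamma - Kf Z t 0))).
        { apply (proj1 (continuity_pt_filterlim (fun e => Kf Z t gamma - Kf Z t e) 0)).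
          apply (continuity_pt_minus (fun _ => Kf Z t gamma) (Kf Z t)).
          apply continuity_pt_const. intros a b; auto. apply Kf_cont0; auto. }
        rewrite Kf_0, Rminus_0_r in H0 by auto. exact H0. }
      eapply filterlim_ext_loc. 2: exact Hc.
      generalize Evt. apply filter_imp. intros e He. symmetry.
      rewrite (RInt_ext _ (fun s => s * S2 Z t s)).
      2:{ intros x Hx. rewrite Rmin_left in Hx by lra. rewrite Rmax_right in Hx by lra.
          rewrite (Bder_eq Z t HZ Hl Hbl B B' HB HB' x) by lra.
          rewrite Cdiv_mul_l. reflexivity.
          rewrite (lim_identity Z t HZ Hl Hbl B HB gamma x) by lra.
          apply Cmult_neq_0; auto. apply cexp_neq0. }
      apply is_RInt_unique.
      apply (is_RInt_derive (Kf Z t) (fun s => s * S2 Z t s)).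
      * intros x Hx. rewrite Rmin_left in Hx by lra. rewrite Rmax_right in Hx by lra.
        apply Kf_der; auto. lra.
      * intros x Hx. rewrite Rmin_left in Hx by lra. rewrite Rmax_right in Hx by lra.
        apply continuity_pt_filterlim. apply (continuity_pt_mult (fun s => s) (S2 Z t)).
        apply continuity_pt_id. apply (proj1 (proj2 (S_cont Z t HZ Hl Hbl x ltac:(lra)))).
    + eapply Rle_trans. apply (Kf_bound Z t HZ Hl Hbl gamma M HM).
      apply Rmult_le_compat_r; auto. pose proof (pow2_ge_0 gamma).
      assert (9 <= PI^2) by nra. nra.
Qed.
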